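(* Let $G$ be a finite, simple, connected $S_4$ graph with $n$ nodes. Then any self-directed learning algorithm for the convex bipartitions of $G$ makes $\Omega\left(\omega(G)/\ln n\right)$ mistakes in the worst case, i.e., $M_{\mathrm{sd}}(\mathcal{H})=\Omega(\omega(G)/\ln n)$ where $\mathcal{H}$ is the set of convex bipartitions of $G$.
   Context: Self-directed learning: an unknown labeling $y\in\mathcal{H}$ is fixed; for $t=1,\dots,n$ the learner, knowing $G$ and $\mathcal{H}$ but not $y$, selects a not-yet-selected node, predicts its label, then observes the true label; $M_{\mathrm{sd}}(\mathcal{H})$ is the minimum over algorithms of the worst-case number of mistakes over $y\in\mathcal{H}$. The interval $I(u,v)$ is the set of nodes on at least one shortest $u$–$v$ path; $C\subseteq V$ is convex if $I(a,b)\subseteq C$ for all $a,b\in C$; $\mathrm{conv}(A)$ is the smallest convex set containing $A$. A halfspace (convex bipartition) is a set $H\subseteq V$ with $H$ and $V\setminus H$ both convex (equivalently, a labeling $V\to\{1,2\}$ with both classes convex). $G$ is $S_4$ if for all $A,B\subseteq V$ with $\mathrm{conv}(A)\cap\mathrm{conv}(B)=\emptyset$ there is a halfspace $H$ with $A\subseteq H$ and $B\subseteq V\setminus H$. $\omega(G)$ is the clique number of $G$. *)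

(* Defs.v *)
From mathcomp Require Import all_boot.
From Stdlib Require Import Reals.

Set Implicit Arguments.
Unset Strict Implicit.
Unset Printing Implicit Defensive.

Section Graphs.
Variables (T : finType) (e : rel T).

Definition in_interval (u v w : T) : Prop :=
  exists p : seq T,
    [/\ path e u p, last u p = v, w \in u :: p &
        forall q : seq T, path e u q -> last u q = v -> size p <= size q].

Definition convex (C : {set T}) : Prop :=
  forall a b w, a \in C -> b \in C -> in_interval a b w -> w \in C.

Definition in_conv (A : {set T}) (x : T) : Prop :=
  forall C : {set T}, convex C -> A \subset C -> x \in C.

Definition halfspace (H : {set T}) : Prop := convex H /\ convex (~: H).

Definition S4 : Prop :=
  forall A B : {set T}, (forall x, ~ (in_conv A x /\ in_conv B x)) ->
    exists H : {set T}, halfspace H /\ A \subset H /\ B \subset ~: H.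

(* Labelings V -> {1,2} encoded as bool; a convex bipartition labeling. *)
Definition halfspace_labeling (y : T -> bool) : Prop :=
  convex [set x | y x] /\ convex [set x | ~~ y x].

Definition clique (K : {set T}) : bool :=
  [forall x in K, forall z in K, (x != z) ==> e x z].

Definition clique_number : nat := \max_(K : {set T} | clique K) #|K|.

(* A history is the sequence of (selected node,
   true label) pairs revealed so far; a (deterministic) algorithm maps the
   history to the next selected node and its predicted label. *)
Definition sd_algorithm := seq (T * bool) -> T * bool.

Definition valid_sd (Alg : sd_algorithm) : Prop :=
  forall h : seq (T * bool), uniq (map fst h) -> size h < #|T| ->
    (Alg h).1 \notin map fst h.

Fixpoint sd_run (Alg : sd_algorithm) (y : T -> bool) (k : nat)
    (h : seq (T * bool)) : nat :=
  match k with
  | 0 => 0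
  | k'.+1 =>
      let v := (Alg h).1 in
      let p := (Alg h).2 in
      (p != y v) + sd_run Alg y k' (rcons h (v, y v))
  end.

Definition sd_mistakes (Alg : sd_algorithm) (y : T -> bool) : nat :=
  sd_run Alg y #|T| [::].

End Graphs.

(* Main.v *)
Require Import Defs.
From mathcomp Require Import all_boot.
From Stdlib Require Import Reals.
From Stdlib Require Import ClassicalEpsilon Lra.
From mathcomp Require Import zify.
Set Implicit Arguments.
Unset Strict Implicit.
Unset Printing Implicit Defensive.

Fixpoint mset (T : finType) (Alg : sd_algorithm T) (y : T -> bool) (k : nat)
  (h : seq (T * bool)) : {set T} :=
  match k with
  | 0 => set0
  | k'.+1 => (if (Alg h).2 != y (Alg h).1 then [set (Alg h).1] else set0)
             :|: mset Alg y k' (rcons h ((Alg h).1, y (Alg h).1))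
  end.

Fixpoint fhist (T : finType) (Alg : sd_algorithm T) (y : T -> bool) (k : nat)
  (h : seq (T * bool)) : seq (T * bool) :=
  match k with
  | 0 => h
  | k'.+1 => fhist Alg y k' (rcons h ((Alg h).1, y (Alg h).1))
  end.

Lemma mset_fresh (T : finType) (Alg : sd_algorithm T) y :
  valid_sd Alg -> forall k h, uniq (map fst h) -> size h + k <= #|T| ->
  forall v, v \in mset Alg y k h -> v \notin map fst h.
Proof.
move=> val; elim=> [|k IH] h uh sz v //=.
  by rewrite inE.
have fr : (Alg h).1 \notin map fst h.
  by apply: val => //; rewrite -addSnnS in sz; exact: leq_trans (leq_addr _ _) sz.
rewrite inE => /orP [].
  by case: ifP => _; rewrite ?inE // => /eqP ->.
move=> /IH H.
have : v \notin map fst (rcons h ((Alg h).1, y (Alg h).1)).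
  apply: H; first by rewrite map_rcons rcons_uniq fr.
  by rewrite size_rcons addSnnS.
by rewrite map_rcons mem_rcons inE negb_or => /andP [].
Qed.

Lemma mset_card (T : finType) (Alg : sd_algorithm T) y :
  valid_sd Alg -> forall k h, uniq (map fst h) -> size h + k <= #|T| ->
  #|mset Alg y k h| = sd_run Alg y k h.
Proof.
move=> val; elim=> [|k IH] h uh sz /=; first by rewrite cards0.
have fr : (Alg h).1 \notin map fst h.
  by apply: val => //; rewrite -addSnnS in sz; exact: leq_trans (leq_addr _ _) sz.
have uh' : uniq (map fst (rcons h ((Alg h).1, y (Alg h).1))) by rewrite map_rcons rcons_uniq fr.
have sz' : size (rcons h ((Alg h).1, y (Alg h).1)) + k <= #|T| by rewrite size_rcons addSnnS.
have nin : (Alg h).1 \notin mset Alg y k (rcons h ((Alg h).1, y (Alg h).1)).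
  apply/negP => /(mset_fresh val uh' sz'); by rewrite map_rcons mem_rcons inE eqxx.
rewrite -(IH _ uh' sz'); case: ifP => _.
  by rewrite cardsU1 nin.
by rewrite set0U.
Qed.

Lemma fhist_inj (T : finType) (Alg : sd_algorithm T) y1 y2 :
  valid_sd Alg -> forall k h, uniq (map fst h) -> size h + k <= #|T| ->
  mset Alg y1 k h = mset Alg y2 k h -> fhist Alg y1 k h = fhist Alg y2 k h.
Proof.
move=> val; elim=> [|k IH] h uh sz //= E.
have fr : (Alg h).1 \notin map fst h.
  by apply: val => //; rewrite -addSnnS in sz; exact: leq_trans (leq_addr _ _) sz.
set v := (Alg h).1 in fr E *.
have uh' : forall b, uniq (map fst (rcons h (v, b))) by move=> b; rewrite map_rcons rcons_uniq fr.
have sz' : forall b, size (rcons h (v, b)) + k <= #|T| by move=> b; rewrite size_rcons addSnnS.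
have nin : forall yy, v \notin mset Alg yy k (rcons h (v, yy v)).
  move=> yy; apply/negP => /(mset_fresh val (uh' _) (sz' _)); by rewrite map_rcons mem_rcons inE eqxx.
have Ev : y1 v = y2 v.
  have := congr1 (fun S : {set T} => v \in S) E => /=.
  rewrite !inE (negbTE (nin y1)) (negbTE (nin y2)) !orbF.
  by case: ifP; case: ifP; rewrite ?inE ?eqxx //; case: (Alg h).2 (y1 v) (y2 v) => [] [] [].
rewrite Ev; apply: IH => //.
apply/setP => x.
have := congr1 (fun S : {set T} => x \in S) E => /=.
have n1 := nin y1; have n2 := nin y2; rewrite Ev in n1.
case: (eqVneq x v) => [->|xv]; first by rewrite (negbTE n1) (negbTE n2).
rewrite !inE; case: ifP; case: ifP; rewrite ?inE ?(negbTE xv) /= ?Ev //=.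
Qed.

Lemma fhist_prop (T : finType) (Alg : sd_algorithm T) y :
  valid_sd Alg -> forall k h, uniq (map fst h) -> size h + k <= #|T| ->
  all (fun p => p.2 == y p.1) h ->
  [/\ uniq (map fst (fhist Alg y k h)), size (fhist Alg y k h) = size h + k &
     all (fun p => p.2 == y p.1) (fhist Alg y k h)].
Proof.
move=> val; elim=> [|k IH] h uh sz A /=; first by rewrite addn0.
have fr : (Alg h).1 \notin map fst h.
  by apply: val => //; rewrite -addSnnS in sz; exact: leq_trans (leq_addr _ _) sz.
case: (IH (rcons h ((Alg h).1, y (Alg h).1))).
- by rewrite map_rcons rcons_uniq fr.
- by rewrite size_rcons addSnnS.
- by rewrite all_rcons /= eqxx.
by move=> u s a; split => //; rewrite s size_rcons addSnnS.
Qed.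

Lemma mset_inj (T : finType) (Alg : sd_algorithm T) y1 y2 :
  valid_sd Alg -> mset Alg y1 #|T| [::] = mset Alg y2 #|T| [::] -> y1 =1 y2.
Proof.
move=> val E x.
have F := fhist_inj val (k:=#|T|) (h:=[::]) isT (leqnn _) E.
have [u1 s1 a1] := fhist_prop (y:=y1) val (k:=#|T|) (h:=[::]) isT (leqnn _) isT.
have [u2 s2 a2] := fhist_prop (y:=y2) val (k:=#|T|) (h:=[::]) isT (leqnn _) isT.
set s := fhist Alg y1 #|T| [::] in F u1 s1 a1.
have cov : x \in map fst s.
  have := card_uniqP u1; rewrite size_map s1 /= => C.
  have /subset_cardP H : #|map fst s| = #|predT : {pred T}|.
    by rewrite C add0n.
  by rewrite (H (subset_predT _)).
case/mapP: cov => [[z b] zin /= ->].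
move/allP: a1 => /(_ _ zin) /eqP /= <-.
rewrite F in zin; by move/allP: a2 => /(_ _ zin) /eqP.
Qed.

Lemma clique_sub_convex (T : finType) (e : rel T) (K A : {set T}) :
  clique e K -> A \subset K -> convex e A.
Proof.
move=> cK sAK a b w aA bA [p [pth lst win mn]].
case: (eqVneq a b) => [ab|nab].
  have := mn [::] isT ab; rewrite leqn0 => /nilP pnil; subst p.
  by move: win; rewrite inE => /eqP ->.
have eab : e a b.
  move/forall_inP: cK => /(_ a (subsetP sAK _ aA)) /forall_inP /(_ b (subsetP sAK _ bA)).
  by move/implyP/(_ nab).
have := mn [:: b]; rewrite /= eab => /(_ isT erefl).
clear mn; case: p pth lst win => [|c [|d q]] //= _.
  by move=> ab; rewrite ab eqxx in nab.
by move=> ->; rewrite !inE => /orP [/eqP ->|/eqP ->].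
Qed.

Lemma in_conv_convex (T : finType) (e : rel T) (A : {set T}) x :
  convex e A -> in_conv e A x -> x \in A.
Proof. by move=> cA /(_ A cA (subxx _)). Qed.

Definition code (T : finType) (M : nat) (S : {set T}) : {ffun 'I_M -> option T} :=
  [ffun i : 'I_M => nth None (map Some (enum S)) i].

Lemma code_inj (T : finType) (M : nat) (S1 S2 : {set T}) :
  #|S1| <= M -> #|S2| <= M -> code M S1 = code M S2 -> S1 = S2.
Proof.
suff H : forall S : {set T}, #|S| <= M -> forall x,
    (x \in S) = [exists i : 'I_M, code M S i == Some x].
  by move=> h1 h2 E; apply/setP => x; rewrite (H _ h1) (H _ h2) E.
move=> S hS x; apply/idP/existsP.
  move=> xS.
  have xe : x \in enum S by rewrite mem_enum.
  have lt : index x (enum S) < M.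
    by apply: leq_trans hS; rewrite cardE index_mem.
  exists (Ordinal lt); rewrite ffunE /=.
  by rewrite (nth_map x) ?index_mem // nth_index.
case=> i; rewrite ffunE.
case: (ltnP i (size (enum S))) => lt.
  by rewrite (nth_map x) // => /eqP [<-]; rewrite -mem_enum mem_nth.
by rewrite nth_default ?size_map.
Qed.

Lemma INR_expn a b : INR (expn a b) = (INR a ^ b)%R.
Proof.
elim: b => [|b IH] //=; by rewrite expnS -multE mult_INR IH.
Qed.

Lemma count_bound (T : finType) (e : rel T) (Alg : sd_algorithm T) :
  S4 e -> valid_sd Alg ->
  exists y : T -> bool, halfspace_labeling e y /\
    expn 2 (clique_number e) <= expn #|T|.+1 (sd_mistakes Alg y).
Proof.
move=> s4 val.
have [K cK Kmax] : {K : {set T} | clique e K & clique_number e = #|K|}.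
  rewrite /clique_number; apply: eq_bigmax_cond.
  apply/card_gt0P; exists set0; apply/forall_inP => x; by rewrite inE.
have HS : forall A : {set T}, exists H : {set T},
    A \subset K -> halfspace e H /\ H :&: K = A.
  move=> A; case: (classic (A \subset K)) => [sAK|nsAK]; last by exists set0.
  have cA : convex e A := clique_sub_convex cK sAK.
  have cB : convex e (K :\: A) := clique_sub_convex cK (subsetDl K A).
  have [H [hH [sAH sBH]]] : exists H : {set T}, halfspace e H /\ A \subset H /\ K :\: A \subset ~: H.
    apply: s4 => x [/(in_conv_convex cA) xA /(in_conv_convex cB)].
    by rewrite inE xA.
  exists H => _; split => //; apply/setP => x; rewrite inE.
  case xK: (x \in K); rewrite ?andbF ?andbT; last first.
    by apply/esym/negbTE; apply/negP => /(subsetP sAK); rewrite xK.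
  case xA: (x \in A); first by rewrite (subsetP sAH).
  have : x \in K :\: A by rewrite inE xA xK.
  by move/(subsetP sBH); rewrite inE => /negbTE.
pose hs A := proj1_sig (constructive_indefinite_description _ (HS A)).
have hsP : forall A : {set T}, A \subset K -> halfspace e (hs A) /\ hs A :&: K = A.
  by move=> A; exact: (proj2_sig (constructive_indefinite_description _ (HS A))).
pose y A := fun x => x \in hs A.
have yhs : forall A : {set T}, A \subset K -> halfspace_labeling e (y A).
  move=> A sAK; have [[c1 c2] _] := hsP A sAK; split.
    move=> a b w ha hb hw; rewrite !inE in ha hb *; exact: (c1 a b w ha hb hw).
  move=> a b w ha hb hw; rewrite !inE in ha hb *.
  have : w \in ~: hs A by apply: (c2 a b w) => //; rewrite inE.
  by rewrite inE.
have [A0 A0in A0max] := @eq_bigmax_cond _ (mem (powerset K)) (fun A => sd_mistakes Alg (y A))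
   (ltac:(apply/card_gt0P; exists set0; by rewrite powersetE sub0set)).
set M := sd_mistakes Alg (y A0) in A0max.
have A0K : A0 \subset K by rewrite powersetE in A0in.
exists (y A0); split; first exact: yhs.
have cardm : forall A : {set T}, A \in powerset K -> #|mset Alg (y A) #|T| [::]| <= M.
  move=> A AK; rewrite mset_card //= -A0max.
  exact: (@leq_bigmax_cond _ (mem (powerset K)) (fun A => sd_mistakes Alg (y A)) A AK).
pose F A := code M (mset Alg (y A) #|T| [::]).
have Finj : {in powerset K &, injective F}.
  move=> A B AK BK /code_inj E.
  have E2 := mset_inj val (E (cardm _ AK) (cardm _ BK)).
  have hAB : hs A = hs B by apply/setP => x; exact: E2.
  rewrite !powersetE in AK BK.
  by rewrite -(proj2 (hsP A AK)) -(proj2 (hsP B BK)) hAB.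
rewrite Kmax -card_powerset -(card_in_imset Finj).
apply: leq_trans (max_card _) _.
by rewrite card_ffun card_option card_ord.
Qed.

Lemma ln_le' x y : (0 < x)%R -> (x <= y)%R -> (ln x <= ln y)%R.
Proof.
move=> hx /Rle_lt_or_eq_dec [h|->]; last exact: Rle_refl.
by apply: Rlt_le; apply: ln_increasing.
Qed.

Theorem mainTheorem10 :
  exists c : R, (0 < c)%R /\ exists N : nat,
    forall (T : finType) (e : rel T),
      symmetric e -> irreflexive e -> (forall x y : T, connect e x y) ->
      S4 e -> N <= #|T| ->
      forall Alg : sd_algorithm T, valid_sd Alg ->
        exists y : T -> bool, halfspace_labeling e y /\
          (c * INR (clique_number e) / ln (INR #|T|) <= INR (sd_mistakes Alg y))%R.
Proof.
have l2 : (0 < ln 2)%R by have := ln_lt_2; lra.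
exists (ln 2 / 2)%R; split; first lra.
exists 2 => T e _ _ _ s4 n2 Alg val.
have [y [hy B]] := count_bound s4 val.
exists y; split => //.
set w := clique_number e in B *; set M := sd_mistakes Alg y in B *; set n := #|T| in n2 B *.
have B2 : expn 2 w <= expn n (2 * M).
  apply: leq_trans B _; rewrite expnM.
  case: M => [|m] //; rewrite leq_exp2r //. 
  have : 2 <= n := n2. rewrite expnS expn1. nia.
have R1 : (INR w * ln 2 <= INR (2 * M) * ln (INR n))%R.
  rewrite -!ln_pow; try (apply: lt_0_INR; apply/leP; lia); try lra.
  rewrite -!INR_expn; apply: ln_le'.
    by apply: pow_lt; lra.
  rewrite (_ : 2%R = INR 2); last by rewrite /=; lra.
  by rewrite -INR_expn; apply: le_INR; apply/leP.
have lnp : (0 < ln (INR n))%R.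
  rewrite -ln_1; apply: ln_increasing; first lra.
  have : (INR 2 <= INR n)%R by apply: le_INR; apply/leP.
  rewrite /= ; lra.
rewrite mult_INR /= in R1.
apply (Rmult_le_reg_r (ln (INR n))) => //.
replace (ln 2 / 2 * INR w / ln (INR n) * ln (INR n))%R with (ln 2 / 2 * INR w)%R by (field; lra).
lra.
Qed.
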